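(* Let $\mathbf{x}=(x_s)_{s\in\mathbb{Z}^3}\in\mathbb{C}^{\mathbb{Z}^3}$ satisfy the Kashaev equation, i.e. $K^C(\mathbf{x})=0$ for every unit cube $C$ in $\mathbb{Z}^3$. Then for every $v\in\mathbb{Z}^3$, $$\Big(\prod_{C\ni v}K^C_v(\mathbf{x})\Big)^2=\Big(\prod_{S\ni v}(x_vx_{v_2}+x_{v_1}x_{v_3})\Big)^2,$$ where the first product is over the $8$ unit cubes $C$ containing $v$, and the second product is over the $12$ unit squares $S$ (with vertices in $\mathbb{Z}^3$) containing $v$, with $v,v_1,v_2,v_3$ the vertices of $S$ listed in cyclic order. Moreover, $$\Big(\prod_{\substack{(i_1,i_2,i_3)\in\{-1,1\}^3\\ i_1i_2i_3=1}}K_v^{C_v(i_1,i_2,i_3)}(\mathbf{x})\Big)^2=\Big(\prod_{\substack{(i_1,i_2,i_3)\in\{-1,1\}^3\\ i_1i_2i_3=-1}}K_v^{C_v(i_1,i_2,i_3)}(\mathbf{x})\Big)^2=\prod_{S\ni v}(x_vx_{v_2}+x_{v_1}x_{v_3}).$$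
   Context: For $v\in\mathbb{Z}^3$ and $(i_1,i_2,i_3)\in\{-1,1\}^3$, $C_v(i_1,i_2,i_3)$ denotes the unique unit cube in $\mathbb{Z}^3$ containing $v$ and $v+(i_1,i_2,i_3)$. For a unit cube $C$ and $\mathbf{x}\in\mathbb{C}^{\mathbb{Z}^3}$, label the values of $\mathbf{x}$ at the vertices of $C$ as $z_{ijk}$, $i,j,k\in\{0,1\}$, via any identification of $C$ with $\{0,1\}^3$ by a cube isomorphism, and set $a=z_{000}z_{111}$, $b=z_{100}z_{011}$, $c=z_{010}z_{101}$, $d=z_{001}z_{110}$, $s=z_{000}z_{011}z_{101}z_{110}$, $t=z_{111}z_{100}z_{010}z_{001}$, and $K^C(\mathbf{x})=2(a^2+b^2+c^2+d^2)-(a+b+c+d)^2-4(s+t)$ (this is independent of the identification). For a vertex $v$ of $C$, $K^C_v(\mathbf{x})$ is defined by choosing such a labeling with $z_{000}=x_v$ (so $z_{111}$ is the value at the vertex opposite $v$) and setting $K^C_v(\mathbf{x})=\tfrac12\big(z_{111}z_{000}^2-z_{000}(z_{100}z_{011}+z_{010}z_{101}+z_{001}z_{110})\big)-z_{100}z_{010}z_{001}$. *)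

(* Defs.v *)
(* the complex numbers are R[i] for R : realType. *)
From HB Require Import structures.
From mathcomp Require Import all_boot all_order all_algebra.
From mathcomp Require Import complex reals.
Set Implicit Arguments. Unset Strict Implicit. Unset Printing Implicit Defensive.
Import Order.TTheory GRing.Theory Num.Theory.
Local Open Scope ring_scope.

Definition pt := (int * int * int)%type.
Definition padd (v w : pt) : pt := (v.1.1 + w.1.1, v.1.2 + w.1.2, v.2 + w.2).
Definition sgnb (b : bool) : int := if b then 1 else -1.

Section Kashaev.
Variable F : fieldType.

Definition Kpoly (z000 z100 z010 z001 z011 z101 z110 z111 : F) : F :=
  let a := z000 * z111 in let b := z100 * z011 in
  let c := z010 * z101 in let d := z001 * z110 in
  let s := z000 * z011 * z101 * z110 in let t := z111 * z100 * z010 * z001 in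
  2 * (a ^+ 2 + b ^+ 2 + c ^+ 2 + d ^+ 2) - (a + b + c + d) ^+ 2 - 4 * (s + t).

Definition Kvpoly (z000 z100 z010 z001 z011 z101 z110 z111 : F) : F :=
  2^-1 * (z111 * z000 ^+ 2 - z000 * (z100 * z011 + z010 * z101 + z001 * z110))
  - z100 * z010 * z001.
End Kashaev.

Section Defs.
Variable F : fieldType.
Variable x : pt -> F.

Definition Kcube (w : pt) : F :=
  let z i j k := x (padd w (i, j, k)) in
  Kpoly (z 0 0 0) (z 1 0 0) (z 0 1 0) (z 0 0 1) (z 0 1 1) (z 1 0 1) (z 1 1 0) (z 1 1 1).

Definition kashaev : Prop := forall w : pt, Kcube w = 0.

(* K_v^{C_v(i1,i2,i3)}: labelling z_abc = x(v + (a i1, b i2, c i3)),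
   a cube isomorphism sending 000 to v *)
Definition Kv (v : pt) (i1 i2 i3 : int) : F :=
  let z a b c := x (padd v (a * i1, b * i2, c * i3)) in
  Kvpoly (z 0 0 0) (z 1 0 0) (z 0 1 0) (z 0 0 1) (z 0 1 1) (z 1 0 1) (z 1 1 0) (z 1 1 1).

Definition Kvb (v : pt) (i : bool * bool * bool) : F :=
  Kv v (sgnb i.1.1) (sgnb i.1.2) (sgnb i.2).

(* term x_v x_{v2} + x_{v1} x_{v3} for the square v, v+d1, v+d1+d2, v+d2 *)
Definition sqterm (v d1 d2 : pt) : F :=
  x v * x (padd (padd v d1) d2) + x (padd v d1) * x (padd v d2).

Definition sqprod (v : pt) : F :=
  \prod_(st : bool * bool)
    (sqterm v (sgnb st.1, 0, 0) (0, sgnb st.2, 0)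
     * sqterm v (sgnb st.1, 0, 0) (0, 0, sgnb st.2)
     * sqterm v (0, sgnb st.1, 0) (0, 0, sgnb st.2)).
End Defs.

(* Main.v *)
Require Import Defs.
From HB Require Import structures.
From mathcomp Require Import all_boot all_order all_algebra.
From mathcomp Require Import complex reals ring.
Import Order.TTheory GRing.Theory Num.Theory.
Local Open Scope ring_scope.
Lemma key (F : numFieldType) (z000 z100 z010 z001 z011 z101 z110 z111 : F) :
  Kvpoly z000 z100 z010 z001 z011 z101 z110 z111 ^+ 2 =
  (z000*z011 + z010*z001) * (z000*z101+z100*z001) * (z000*z110 + z100*z010)
  + 4^-1 * z000^+2 * Kpoly z000 z100 z010 z001 z011 z101 z110 z111.
Proof. rewrite /Kvpoly /Kpoly. by field. Qed.
Lemma flip1 (F : fieldType) (z000 z100 z010 z001 z011 z101 z110 z111 : F) :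
  Kpoly z000 z100 z010 z001 z011 z101 z110 z111 = Kpoly z100 z000 z110 z101 z111 z001 z010 z011.
Proof. rewrite /Kpoly; ring. Qed.
Lemma flip2 (F : fieldType) (z000 z100 z010 z001 z011 z101 z110 z111 : F) :
  Kpoly z000 z100 z010 z001 z011 z101 z110 z111 = Kpoly z010 z110 z000 z011 z001 z111 z100 z101.
Proof. rewrite /Kpoly; ring. Qed.
Lemma flip3 (F : fieldType) (z000 z100 z010 z001 z011 z101 z110 z111 : F) :
  Kpoly z000 z100 z010 z001 z011 z101 z110 z111 = Kpoly z001 z101 z011 z000 z010 z100 z111 z110.
Proof. rewrite /Kpoly; ring. Qed.

Definition G {F : fieldType} (x : pt -> F) v (i : bool * bool * bool) :=
  sqterm x v (sgnb i.1.1, 0, 0) (0, sgnb i.1.2, 0) *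
  sqterm x v (sgnb i.1.1, 0, 0) (0, 0, sgnb i.2) *
  sqterm x v (0, sgnb i.1.2, 0) (0, 0, sgnb i.2).

Definition m (b : bool) : int := if b then 0 else -1.

Lemma cubeK (R : realType) (x : pt -> R[i]) : kashaev x -> forall v i,
  Kvb x v i ^+ 2 = G x v i.
Proof.
move=> hk [[v1 v2] v3] [[b1 b2] b3].
have H := hk (v1 + m b1, v2 + m b2, v3 + m b3).
rewrite /Kvb /Kv key /G /sqterm.
move: H; rewrite /Kcube /padd /=.
case: b1; case: b2; case: b3; rewrite /= ?mul0r ?mul1r ?mulr1 ?addr0 ?subrK => H.
all: first [rewrite H | rewrite flip1 H | rewrite flip2 H | rewrite flip3 H | rewrite flip1 flip2 H | rewrite flip1 flip3 H | rewrite flip2 flip3 H | rewrite flip1 flip2 flip3 H]; rewrite mulr0 addr0; ring.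
Qed.
Lemma prod8 (R : comRingType) (F : bool*bool*bool -> R) : \prod_i F i =
  F (true,true,true) * F (true,true,false) * (F (true,false,true) * F (true,false,false))
  * (F (false,true,true) * F (false,true,false) * (F (false,false,true) * F (false,false,false))).
Proof.
transitivity (\prod_(p : bool*bool) \prod_(k:bool) F (p.1,p.2,k)).
  by rewrite pair_bigA; apply: eq_big => // -[[a b] c].
transitivity (\prod_(a : bool) \prod_(b:bool) \prod_(k:bool) F (a,b,k)).
  by rewrite [RHS]pair_bigA; apply: eq_big => // -[a b].
by rewrite !big_bool.
Qed.

Lemma prod4 (R : comRingType) (F : bool*bool -> R) : \prod_i F i =
  F (true,true) * F (true,false) * (F (false,true) * F (false,false)).
Proof.
transitivity (\prod_(a : bool) \prod_(b:bool) F (a,b)).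
  by rewrite [RHS]pair_bigA; apply: eq_big => // -[a b].
by rewrite !big_bool.
Qed.

Theorem proposition2p8 (R : realType) (x : pt -> R[i]) :
  kashaev x ->
  forall v : pt,
    (\prod_(i : bool * bool * bool) Kvb x v i) ^+ 2 = (sqprod x v) ^+ 2 /\
    (\prod_(i : bool * bool * bool | sgnb i.1.1 * sgnb i.1.2 * sgnb i.2 == 1)
        Kvb x v i) ^+ 2 = sqprod x v /\
    (\prod_(i : bool * bool * bool | sgnb i.1.1 * sgnb i.1.2 * sgnb i.2 == -1)
        Kvb x v i) ^+ 2 = sqprod x v.
Proof.
move=> hk v.
rewrite -!prodrXl !(eq_bigr _ (fun i _ => @cubeK _ x hk v i)) /sqprod !prod4 (big_mkcond (fun i => _ == 1)) (big_mkcond (fun i => _ == -1)) !prod8 /G /=.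
split; [ring | split; ring].
Qed.
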